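(* Let $A$ be an Archimedean semiprime $f$-algebra which is bounded quasi-inversion closed. Then every intermediate algebra in $A$ (i.e., every subalgebra $B$ of $A$ with $A_b\subseteq B$) is an order ideal of $A$; that is, if $a\in A$, $b\in B$ and $|a|\le |b|$, then $a\in B$.
   Context: An $f$-algebra is a real associative algebra that is a vector lattice with $A_+A_+\subseteq A_+$ and such that $a\wedge b=0$ implies $ac\wedge b=ca\wedge b=0$ for all $c\in A_+$. It is semiprime if $0$ is its only nilpotent element. An element $a\in A$ is quasi-invertible if there is $a^\ast\in A$ with $a+a^\ast=aa^\ast$; $Q(A)$ denotes the set of quasi-invertible elements. $A$ is called bounded quasi-inversion closed if for every $a\in A$, $|a|\le|a^2-a|$ implies $a\in Q(A)$. For $a\in A$, $A(a)=\{x\in A: |x|\le \mu|a| \text{ for some }\mu\in(0,\infty)\}$ is the principal order ideal generated by $a$. An element $a$ is bounded if $a^2\in A(a)$, i.e. $a^2\le\mu|a|$ for some $\mu\in(0,\infty)$; $A_b$ is the set of bounded elements. An intermediate algebra in $A$ is a subalgebra of $A$ containing $A_b$. An order ideal is a solid vector subspace. *)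

(* Defs.v *)
From HB Require Import structures.
From mathcomp Require Import all_boot all_order all_algebra.
From mathcomp Require Import reals.
Set Implicit Arguments. Unset Strict Implicit. Unset Printing Implicit Defensive.
Import Order.TTheory GRing.Theory Num.Theory.
Local Open Scope ring_scope.

(* A real f-algebra structure on a real vector space V (not assumed unital):
   an associative bilinear product [fmul], a vector-lattice order [fle] with
   binary supremum [fjoin] and infimum [fmeet], such that products of positive
   elements are positive and  a /\ b = 0  implies  ac /\ b = ca /\ b = 0 for c >= 0. *)
Record fAlgebra (R : realType) (V : lmodType R) := FAlgebra {
  fmul : V -> V -> V;
  fle : V -> V -> Prop;
  fjoin : V -> V -> V;
  fmeet : V -> V -> V;
  fmulA : forall a b c, fmul a (fmul b c) = fmul (fmul a b) c;
  fmulDl : forall a b c, fmul (a + b) c = fmul a c + fmul b c;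
  fmulDr : forall a b c, fmul a (b + c) = fmul a b + fmul a c;
  fmulZl : forall (k : R) a b, fmul (k *: a) b = k *: fmul a b;
  fmulZr : forall (k : R) a b, fmul a (k *: b) = k *: fmul a b;
  fle_refl : forall a, fle a a;
  fle_anti : forall a b, fle a b -> fle b a -> a = b;
  fle_trans : forall a b c, fle a b -> fle b c -> fle a c;
  fle_add : forall a b c, fle a b -> fle (a + c) (b + c);
  fle_scale : forall (k : R) a b, 0 <= k -> fle a b -> fle (k *: a) (k *: b);
  fjoin_ub1 : forall a b, fle a (fjoin a b);
  fjoin_ub2 : forall a b, fle b (fjoin a b);
  fjoin_least : forall a b c, fle a c -> fle b c -> fle (fjoin a b) c;
  fmeet_lb1 : forall a b, fle (fmeet a b) a;
  fmeet_lb2 : forall a b, fle (fmeet a b) b;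
  fmeet_greatest : forall a b c, fle c a -> fle c b -> fle c (fmeet a b);
  fmul_pos : forall a b, fle 0 a -> fle 0 b -> fle 0 (fmul a b);
  fmeet_mul : forall a b c, fmeet a b = 0 -> fle 0 c ->
    fmeet (fmul a c) b = 0 /\ fmeet (fmul c a) b = 0
}.

Section FAlgebraDefs.
Variables (R : realType) (V : lmodType R) (A : fAlgebra V).

Definition fabs (a : V) : V := fjoin A a (- a).

(* a^(n+1) *)
Fixpoint fpowS (a : V) (n : nat) : V :=
  match n with O => a | S m => fmul A a (fpowS a m) end.

Definition archimedean : Prop :=
  forall a b, fle A 0 a -> fle A 0 b ->
    (forall n : nat, fle A (a *+ n) b) -> a = 0.

Definition semiprime : Prop :=
  forall a, (exists n : nat, fpowS a n = 0) -> a = 0.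

Definition quasi_invertible (a : V) : Prop :=
  exists a' : V, a + a' = fmul A a a'.

Definition bqi_closed : Prop :=
  forall a, fle A (fabs a) (fabs (fmul A a a - a)) -> quasi_invertible a.

Definition in_principal_ideal (a x : V) : Prop :=
  exists mu : R, 0 < mu /\ fle A (fabs x) (mu *: fabs a).

Definition bounded (a : V) : Prop := in_principal_ideal a (fmul A a a).

Definition subalgebra (B : V -> Prop) : Prop :=
  [/\ B 0,
      (forall x y, B x -> B y -> B (x + y)),
      (forall (k : R) x, B x -> B (k *: x)) &
      (forall x y, B x -> B y -> B (fmul A x y))].

Definition intermediate_algebra (B : V -> Prop) : Prop :=
  subalgebra B /\ (forall a, bounded a -> B a).

End FAlgebraDefs.

(* Main.v *)
Require Import Defs.
From HB Require Import structures.
From mathcomp Require Import all_boot all_order all_algebra.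
From mathcomp Require Import reals.
Import Order.TTheory GRing.Theory Num.Theory.
Local Open Scope ring_scope.

Local Notation fA R V := (@fAlgebra R V).

Lemma le_sub {R : realType} {V : lmodType R} (A : fA R V) (u v : V) :
  fle A u v <-> fle A 0 (v - u).
Proof.
split=> h.
- have := fle_add (- u) h. by rewrite addrN.
- have := fle_add u h. by rewrite add0r subrK.
Qed.

Lemma le_add2 {R : realType} {V : lmodType R} (A : fA R V) {u v u' v' : V} :
  fle A u v -> fle A u' v' -> fle A (u + u') (v + v').
Proof.
move=> h1 h2; apply: (fle_trans (b := v + u')).
  exact: fle_add.
rewrite (addrC v u') (addrC v v'); exact: fle_add.
Qed.

Lemma le_opp {R : realType} {V : lmodType R} (A : fA R V) {u v : V} :
  fle A u v -> fle A (- v) (- u).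
Proof.
move=> /(le_sub A) h; apply/(le_sub A); by rewrite opprK addrC.
Qed.

Lemma le_pos_add {R : realType} {V : lmodType R} (A : fA R V) {u v : V} :
  fle A 0 u -> fle A 0 v -> fle A 0 (u + v).
Proof. move=> h1 h2; have := le_add2 A h1 h2; by rewrite addr0. Qed.

Lemma join_comm {R : realType} {V : lmodType R} (A : fA R V) (u v : V) :
  fjoin A u v = fjoin A v u.
Proof.
apply: fle_anti; apply: fjoin_least;
  (apply: fjoin_ub1 || apply: fjoin_ub2).
Qed.

Lemma meet_comm {R : realType} {V : lmodType R} (A : fA R V) (u v : V) :
  fmeet A u v = fmeet A v u.
Proof.
apply: fle_anti; apply: fmeet_greatest;
  (apply: fmeet_lb1 || apply: fmeet_lb2).
Qed.

Lemma meet_id {R : realType} {V : lmodType R} (A : fA R V) (u : V) :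
  fmeet A u u = u.
Proof.
apply: fle_anti; first exact: fmeet_lb1.
apply: fmeet_greatest; exact: fle_refl.
Qed.

Lemma meet_add {R : realType} {V : lmodType R} (A : fA R V) (u v w : V) :
  fmeet A u v + w = fmeet A (u + w) (v + w).
Proof.
apply: fle_anti.
- apply: fmeet_greatest; apply: fle_add; [exact: fmeet_lb1 | exact: fmeet_lb2].
- set M := fmeet A (u + w) (v + w).
  have -> : M = (M - w) + w by rewrite subrK.
  apply: fle_add; apply: fmeet_greatest.
  + have := fle_add (- w) (fmeet_lb1 A (u + w) (v + w)). by rewrite addrK.
  + have := fle_add (- w) (fmeet_lb2 A (u + w) (v + w)). by rewrite addrK.
Qed.

Lemma opp_join {R : realType} {V : lmodType R} (A : fA R V) (u v : V) :
  - fjoin A u v = fmeet A (- u) (- v).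
Proof.
apply: fle_anti.
- apply: fmeet_greatest; apply: (le_opp A); [exact: fjoin_ub1 | exact: fjoin_ub2].
- rewrite -[fmeet A _ _]opprK; apply: (le_opp A); apply: fjoin_least.
  + rewrite -[u]opprK; apply: (le_opp A); rewrite opprK; exact: fmeet_lb1.
  + rewrite -[v]opprK; apply: (le_opp A); rewrite opprK; exact: fmeet_lb2.
Qed.

Definition fpos {R : realType} {V : lmodType R} (A : fA R V) (y : V) := fjoin A y 0.
Definition fneg {R : realType} {V : lmodType R} (A : fA R V) (y : V) := fjoin A (- y) 0.

Lemma fneg_meet {R : realType} {V : lmodType R} (A : fA R V) (y : V) :
  fneg A y = - fmeet A y 0.
Proof.
by apply: oppr_inj; rewrite opprK /fneg opp_join opprK oppr0.
Qed.

Lemma join_meet {R : realType} {V : lmodType R} (A : fA R V) (u v : V) :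
  fjoin A u v + fmeet A u v = u + v.
Proof.
have -> : fmeet A u v = fmeet A (- v + (u + v)) (- u + (u + v)).
  by rewrite addrCA addNr addr0 addrA addNr add0r.
rewrite -meet_add -opp_join (join_comm A v u). by rewrite addrA addrN add0r.
Qed.

Lemma fpos_neg {R : realType} {V : lmodType R} (A : fA R V) (y : V) :
  fpos A y - fneg A y = y.
Proof. by rewrite fneg_meet opprK /fpos join_meet addr0. Qed.

Lemma fpos_ge0 {R : realType} {V : lmodType R} (A : fA R V) (y : V) :
  fle A 0 (fpos A y).
Proof. exact: fjoin_ub2. Qed.

Lemma fneg_ge0 {R : realType} {V : lmodType R} (A : fA R V) (y : V) :
  fle A 0 (fneg A y).
Proof. exact: fjoin_ub2. Qed.

Lemma fpos_neg_disj {R : realType} {V : lmodType R} (A : fA R V) (y : V) :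
  fmeet A (fpos A y) (fneg A y) = 0.
Proof.
have h : fmeet A (fpos A y) (fneg A y) - fneg A y = - fneg A y.
  rewrite meet_add addrN fpos_neg fneg_meet opprK; done.
by move/eqP: h; rewrite subr_eq addNr => /eqP.
Qed.


Lemma fmul0l {R : realType} {V : lmodType R} (A : fA R V) (b : V) : fmul A 0 b = 0.
Proof.
have h := fmulDl A 0 0 b; rewrite addr0 in h.
rewrite -{1}[fmul A 0 b]addr0 in h; by move/addrI: h.
Qed.

Lemma fmul0r {R : realType} {V : lmodType R} (A : fA R V) (b : V) : fmul A b 0 = 0.
Proof.
have h := fmulDr A b 0 0; rewrite addr0 in h.
rewrite -{1}[fmul A b 0]addr0 in h; by move/addrI: h.
Qed.

Lemma fmulNl {R : realType} {V : lmodType R} (A : fA R V) (a b : V) :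
  fmul A (- a) b = - fmul A a b.
Proof.
have h := fmulDl A a (- a) b; rewrite addrN fmul0l in h.
apply: (addrI (fmul A a b)); by rewrite -h addrN.
Qed.

Lemma fmulNr {R : realType} {V : lmodType R} (A : fA R V) (a b : V) :
  fmul A a (- b) = - fmul A a b.
Proof.
have h := fmulDr A a b (- b); rewrite addrN fmul0r in h.
apply: (addrI (fmul A a b)); by rewrite -h addrN.
Qed.

Lemma fmulBl {R : realType} {V : lmodType R} (A : fA R V) (a c b : V) :
  fmul A (a - c) b = fmul A a b - fmul A c b.
Proof. by rewrite fmulDl fmulNl. Qed.

Lemma fmulBr {R : realType} {V : lmodType R} (A : fA R V) (a b c : V) :
  fmul A a (b - c) = fmul A a b - fmul A a c.
Proof. by rewrite fmulDr fmulNr. Qed.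

Lemma mul_mono_l {R : realType} {V : lmodType R} (A : fA R V) {c u v : V} :
  fle A 0 c -> fle A u v -> fle A (fmul A c u) (fmul A c v).
Proof.
move=> hc /(le_sub A) h; apply/(le_sub A); rewrite -fmulBr; exact: fmul_pos.
Qed.

Lemma mul_mono_r {R : realType} {V : lmodType R} (A : fA R V) {c u v : V} :
  fle A 0 c -> fle A u v -> fle A (fmul A u c) (fmul A v c).
Proof.
move=> hc /(le_sub A) h; apply/(le_sub A); rewrite -fmulBl; exact: fmul_pos.
Qed.

Lemma disj_mul0 {R : realType} {V : lmodType R} (A : fA R V) {u v : V} :
  fle A 0 u -> fle A 0 v -> fmeet A u v = 0 -> fmul A u v = 0.
Proof.
move=> hu hv h.
have h1 := (fmeet_mul h hv).1; rewrite meet_comm in h1.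
have h2 := (fmeet_mul h1 hu).2. by rewrite meet_id in h2.
Qed.

Lemma neg_le0 {R : realType} {V : lmodType R} (A : fA R V) {u : V} :
  fle A 0 u -> fle A (- u) 0.
Proof. move=> h; have := le_opp A h; by rewrite oppr0. Qed.

Lemma abs_pos {R : realType} {V : lmodType R} (A : fA R V) {u : V} :
  fle A 0 u -> fabs A u = u.
Proof.
move=> h; apply: fle_anti; last exact: fjoin_ub1.
apply: fjoin_least; first exact: fle_refl.
exact: fle_trans (neg_le0 A h) h.
Qed.

Lemma L_lemma {R : realType} {V : lmodType R} (A : fA R V) (sp : semiprime A)
  {c g y : V} : fle A 0 c -> fle A 0 g -> y + fmul A c y = g -> fle A 0 y.
Proof.
move=> hc hg h.
have hy : y = fpos A y - fneg A y by rewrite fpos_neg.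
have hPN : fmul A (fpos A y) (fneg A y) = 0.
  apply: disj_mul0; [exact: fpos_ge0 | exact: fneg_ge0 | exact: fpos_neg_disj].
have hyN : fmul A y (fneg A y) = - fmul A (fneg A y) (fneg A y).
  by rewrite {1}hy fmulBl hPN sub0r.
have e : y = g - fmul A c y by rewrite -h addrK.
have e2 : fmul A y (fneg A y) =
    fmul A g (fneg A y) + fmul A c (fmul A (fneg A y) (fneg A y)).
  by rewrite {1}e fmulBl -fmulA hyN fmulNr opprK.
have hNN0 : fle A 0 (fmul A (fneg A y) (fneg A y)) by apply: fmul_pos; exact: fneg_ge0.
have h1 : fle A 0 (- fmul A (fneg A y) (fneg A y)).
  rewrite -hyN e2; apply: le_pos_add; apply: fmul_pos => //; first exact: fneg_ge0.
have hNN : fmul A (fneg A y) (fneg A y) = 0.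
  have h2 := le_opp A h1; rewrite opprK oppr0 in h2.
  exact: (fle_anti h2 hNN0).
have hN : fneg A y = 0 by apply: sp; exists 1%N.
rewrite hy hN subr0; exact: fpos_ge0.
Qed.

Lemma qi_lemma {R : realType} {V : lmodType R} (A : fA R V) (bq : bqi_closed A)
  {c : V} : fle A 0 c -> exists x, fmul A c x = c - x.
Proof.
move=> hc.
have hcc : fle A 0 (fmul A c c) by exact: fmul_pos.
have [x hx] : quasi_invertible A (- c).
  apply: bq; rewrite fmulNl fmulNr opprK opprK.
  rewrite /fabs opprK join_comm.
  have -> : fjoin A c (- c) = c by have := abs_pos A hc; rewrite /fabs.
  have -> : fjoin A (fmul A c c + c) (- (fmul A c c + c)) = fmul A c c + c.
    by have := abs_pos A (le_pos_add A hcc hc); rewrite /fabs.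
  apply/(le_sub A); by rewrite addrK.
exists x; rewrite fmulNl in hx.
by rewrite -[fmul A c x]opprK -hx opprD opprK.
Qed.

Lemma zid1 (V : zmodType) (a v t u : V) :
  a + u - v = (a - (v - t)) + (u - t).
Proof. by rewrite opprB [RHS]addrACA [t - v - t]addrAC addrN add0r. Qed.
Lemma zid2 (V : zmodType) (a u q r : V) :
  a - u + (q - (r - u)) = a + q - r.
Proof. by rewrite opprB addrACA addKr. Qed.
Lemma zid3 (V : zmodType) (y yy a ay : V) :
  y - yy + ((a - y) - (ay - yy)) = a - ay.
Proof. by rewrite opprB addrACA addKr (addrC y) subrK. Qed.

Lemma main_pos {R : realType} {V : lmodType R} (A : fA R V)
  (sp : semiprime A) (bq : bqi_closed A) (B : V -> Prop)
  (hB : intermediate_algebra A B) (b a : V) :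
  B b -> fle A 0 a -> fle A a (fpos A b + fneg A b) -> B a.
Proof.
case: hB => [[B0 BD BZ BM] Bball] hb ha hap.
set p := fpos A b + fneg A b.
have hp : fle A 0 p by apply: le_pos_add; [exact: fpos_ge0 | exact: fneg_ge0].
set s := fmul A p p.
have hs0 : fle A 0 s by exact: fmul_pos.
have hPN : fmul A (fpos A b) (fneg A b) = 0.
  apply: disj_mul0; [exact: fpos_ge0 | exact: fneg_ge0 | exact: fpos_neg_disj].
have hNP : fmul A (fneg A b) (fpos A b) = 0.
  apply: disj_mul0; [exact: fneg_ge0 | exact: fpos_ge0 | ].
  by rewrite meet_comm fpos_neg_disj.
have hbs : fmul A b b = s.
  rewrite /s /p -{1 2}(fpos_neg A b) !fmulBl !fmulBr !fmulDl !fmulDr hPN hNP.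
  by rewrite subr0 sub0r opprK !addr0 add0r.
have [x hx] := qi_lemma A bq hs0.
set y := a - fmul A x a.
have hsy : fmul A s y = fmul A x a.
  by rewrite /y fmulBr fmulA hx fmulBl subKr.
have hya : y + fmul A s y = a by rewrite hsy /y subrK.
have hy0 : fle A 0 y := L_lemma A sp hs0 ha hya.
have hsy' : fmul A s y = a - y by apply: (addrI y); rewrite hya addrC subrK.
have [x1 hx1] := qi_lemma A bq hp.
have hm : fle A 0 (a + fmul A s a - fmul A p a).
  set v := fmul A p a.
  have hv0 : fle A 0 v by exact: fmul_pos.
  set t := fmul A x1 v.
  have hpt : fmul A p t = fmul A p v - t by rewrite /t fmulA hx1 fmulBl.
  set w := a - (v - t).
  have hw : w + fmul A p w = a.
    by rewrite /w fmulBr fmulBr hpt subKr subrK.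
  have hw0 := L_lemma A sp hp ha hw.
  have ht : t + fmul A p t = fmul A p v by rewrite hpt addrC subrK.
  have ht0 := L_lemma A sp hp (fmul_pos hp hv0) ht.
  have hpt0 : fle A 0 (fmul A p t) by exact: fmul_pos.
  have hpv : fmul A p v = fmul A s a by rewrite /v fmulA.
  rewrite (zid1 _ a v t) -hpv -hpt; exact: le_pos_add.
have hw2 : fle A 0 (a - fmul A p y).
  apply: (L_lemma A sp hs0 hm).
  have hsp : fmul A s (fmul A p y) = fmul A p (fmul A s y).
    by rewrite /s !fmulA.
  rewrite fmulBr hsp hsy' fmulBr.
  exact: zid2.
have hay : fle A (fmul A a y) a.
  apply: fle_trans (mul_mono_r A hy0 hap) _.
  by apply/(le_sub A).
have hyy : fle A 0 (y - fmul A y y).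
  apply: (L_lemma A sp hs0 (proj1 (le_sub A _ _) hay)).
  rewrite fmulBr fmulA hsy' fmulBl.
  exact: zid3.
have hbnd : bounded A y.
  exists 1; split; first exact: ltr01.
  rewrite (abs_pos A (fmul_pos hy0 hy0)) (abs_pos A hy0) scale1r.
  by apply/(le_sub A).
have By : B y := Bball y hbnd.
have Bs : B s by rewrite -hbs; exact: BM.
rewrite -hya; apply: BD => //; exact: BM.
Qed.

Theorem theorem8 (R : realType) (V : lmodType R) (A : fAlgebra V) :
  archimedean A -> semiprime A -> bqi_closed A ->
  forall B : V -> Prop, intermediate_algebra A B ->
  forall a b : V, B b -> fle A (fabs A a) (fabs A b) -> B a.
Proof.
move=> _ sp bq B hB a b hb hab.
have hB' := hB; case: hB' => [[B0 BD BZ BM] _].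
set p := fpos A b + fneg A b.
have hp : fle A 0 p by apply: le_pos_add; [exact: fpos_ge0 | exact: fneg_ge0].
have hNN : fle A (- fneg A b) (fneg A b).
  exact: fle_trans (neg_le0 A (fneg_ge0 A b)) (fneg_ge0 A b).
have hPP : fle A (- fpos A b) (fpos A b).
  exact: fle_trans (neg_le0 A (fpos_ge0 A b)) (fpos_ge0 A b).
have hbp : fle A (fabs A b) p.
  apply: fjoin_least.
  - rewrite -{1}(fpos_neg A b); apply: le_add2 => //; exact: fle_refl.
  - rewrite -{1}(fpos_neg A b) opprB /p addrC; apply: le_add2 => //; exact: fle_refl.
have hap : fle A a p.
  exact: fle_trans (fjoin_ub1 A a (- a)) (fle_trans hab hbp).
have hnap : fle A (- a) p.
  exact: fle_trans (fjoin_ub2 A a (- a)) (fle_trans hab hbp).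
have Bpos : B (fpos A a).
  apply: (main_pos A sp bq B hB b _ hb); first exact: fpos_ge0.
  exact: fjoin_least.
have Bneg : B (fneg A a).
  apply: (main_pos A sp bq B hB b _ hb); first exact: fneg_ge0.
  exact: fjoin_least.
rewrite -(fpos_neg A a); apply: BD => //.
rewrite -scaleN1r; exact: BZ.
Qed.
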